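(* Let $d=1$ and let $0<\delta<2/3$. The perturbed senile reinforced random walk (Model I) with parameter $\delta$ is diffusive: the limit $\nu(\delta)=\lim_{n\to\infty}\mathbb{E}[|S_n|^2]/n$ exists and is strictly positive, and it is given by \[ \nu(\delta)=\frac{\mathbb{P}(\tau \text{ odd})}{\mathbb{P}(\tau \text{ even})\,\mathbb{E}[\tau]} . \] Moreover $\nu(\delta)\to 0$ as $\delta\to0^+$, and $\nu(\delta)$ is of order $1/|\log\delta|$: there are constants $0<c\le C<\infty$ such that $c/|\log\delta|\le \nu(\delta)\le C/|\log\delta|$ for all sufficiently small $\delta>0$.
   Context: Model I on $\mathbb{Z}^d$ with parameter $\delta>0$: a sequence $(S_n)_{n\ge0}$ of $\mathbb{Z}^d$-valued random variables with filtration $\mathcal{F}_n=\sigma(S_0,\dots,S_n)$, such that $S_0=0$ a.s. and $S_1$ is uniformly distributed on the $2d$ nearest neighbours of the origin. For $n\ge1$ let $e_n=\{S_{n-1},S_n\}$ (an undirected edge) and $m_n=\max\{k\ge1: e_{n-l+1}=e_n \text{ for all } 1\le l\le k\}$ (the number of consecutive times the current edge has just been traversed). For $n\ge1$, conditionally on $\mathcal{F}_n$, the walk traverses $e_n$ again (i.e. $S_{n+1}=S_{n-1}$) with probability $\max\{\frac{1+m_n}{2d+m_n}-\delta,0\}$, and otherwise moves to one of the other $2d-1$ nearest neighbours of $S_n$, each equally likely. (In $d=1$: it recrosses $e_n$ with probability $\frac{1+m_n}{2+m_n}-\delta$ and crosses the other edge with probability $\frac{1}{2+m_n}+\delta$.)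 The random variable $\tau=\sup\{n\ge1: S_m\in\{0,S_1\}\ \text{for all } m\le n\}$ is the number of consecutive traversals of the first edge before leaving it. The walk is called diffusive if $\nu=\lim_{n\to\infty}\mathbb{E}[|S_n|^2]/n$ exists in $(0,\infty)$; $\nu$ is the diffusion constant. *)

(* Defs.v *)
From Stdlib Require Import Reals ZArith List Bool.
Import ListNotations.
Open Scope R_scope.

(* Probability of recrossing the current edge after it has been traversed
   m consecutive times (d = 1): max{(1+m)/(2+m) - delta, 0}. *)
Definition recross_prob (delta : R) (m : nat) : R :=
  Rmax ((1 + INR m) / (2 + INR m) - delta) 0.

(* A trajectory of length n is recorded as its list of steps in {-1,+1}.
   [walk_prob_aux delta prev m steps]: conditional probability of the
   remaining steps, given that the last step was [prev] and the current edge
   has just been traversed m consecutive times.  Reversing the last step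
   (= recrossing e_n) has probability recross_prob; continuing in the same
   direction (= moving to the unique other neighbour) the complement. *)
Fixpoint walk_prob_aux (delta : R) (prev : Z) (m : nat) (steps : list Z) : R :=
  match steps with
  | [] => 1
  | s :: rest =>
      if Z.eqb s (- prev)%Z then recross_prob delta m * walk_prob_aux delta s (S m) rest
      else if Z.eqb s prev then (1 - recross_prob delta m) * walk_prob_aux delta s 1 rest
      else 0
  end.

Definition path_prob (delta : R) (steps : list Z) : R :=
  match steps with
  | [] => 1
  | s :: rest =>
      (if Z.eqb s 1 || Z.eqb s (-1) then / 2 else 0) * walk_prob_aux delta s 1 rest
  end.

Fixpoint all_paths (n : nat) : list (list Z) :=
  match n with
  | O => [[]]
  | S k => map (cons 1%Z) (all_paths k) ++ map (cons (-1)%Z) (all_paths k)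
  end.

Definition sumR (l : list R) : R := fold_right Rplus 0 l.

Fixpoint positions (acc : Z) (steps : list Z) : list Z :=
  match steps with
  | [] => []
  | s :: rest => (acc + s)%Z :: positions (acc + s)%Z rest
  end.

Definition endpoint (steps : list Z) : Z := fold_right Z.add 0%Z steps.

Definition ES2 (delta : R) (n : nat) : R :=
  sumR (map (fun p => path_prob delta p * (IZR (endpoint p)) ^ 2) (all_paths n)).

(* Event {tau = k} on the first k+1 steps: S_m in {0, S_1} for all m <= k,
   and S_{k+1} not in {0, S_1}. *)
Definition tau_event (k : nat) (steps : list Z) : bool :=
  let ps := positions 0 steps in
  let s1 := nth 0 ps 0%Z in
  let onedge := fun x : Z => Z.eqb x 0 || Z.eqb x s1 in
  forallb onedge (firstn k ps) && negb (onedge (nth k ps 0%Z)).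

Definition tau_pmf (delta : R) (k : nat) : R :=
  sumR (map (fun p => if tau_event k p then path_prob delta p else 0)
            (all_paths (S k))).

(* Main.v *)
Require Import Defs.
From Stdlib Require Import Reals ZArith List Bool.
From Coquelicot Require Import Coquelicot.
From Stdlib Require Import Reals ZArith List Bool Lra Lia.
Require Import Defs.
Import ListNotations.
Open Scope R_scope.

Lemma sumR_app l1 l2 : sumR (l1 ++ l2) = sumR l1 + sumR l2.
Proof. induction l1; simpl; [ring| rewrite IHl1; ring]. Qed.

Lemma sumR_scal {A} (F : A -> R) c l : sumR (map (fun x => c * F x) l) = c * sumR (map F l).
Proof. induction l; simpl; [ring| rewrite IHl; ring]. Qed.

Lemma sumR_plus {A} (F H : A -> R) l :
  sumR (map (fun x => F x + H x) l) = sumR (map F l) + sumR (map H l).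
Proof. induction l; simpl; [ring| rewrite IHl; ring]. Qed.

Lemma sumR_ext {A} (F H : A -> R) l : (forall x, In x l -> F x = H x) ->
  sumR (map F l) = sumR (map H l).
Proof. induction l; simpl; intros; auto. rewrite H0, IHl; auto. Qed.

Lemma sumR_le {A} (F H : A -> R) l : (forall x, In x l -> F x <= H x) ->
  sumR (map F l) <= sumR (map H l).
Proof. induction l; simpl; intros; [lra|]. 
  assert (F a <= H a) by auto. assert (sumR (map F l) <= sumR (map H l)) by auto. lra. Qed.

Lemma sumR_nonneg {A} (F : A -> R) l : (forall x, In x l -> 0 <= F x) -> 0 <= sumR (map F l).
Proof. induction l; simpl; intros; [lra|].
  assert (0 <= F a) by auto. assert (0 <= sumR (map F l)) by auto. lra. Qed.

Definition Ex (d : R) (n : nat) (sg : Z) (m : nat) (F : list Z -> R) : R :=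
  sumR (map (fun p => walk_prob_aux d sg m p * F p) (all_paths n)).

Lemma Ex_step d n sg m F : (sg = 1 \/ sg = -1)%Z ->
  Ex d (S n) sg m F = recross_prob d m * Ex d n (- sg) (S m) (fun p => F ((- sg)%Z :: p))
    + (1 - recross_prob d m) * Ex d n sg 1 (fun p => F (sg :: p)).
Proof.
  intros [-> | ->]; unfold Ex; simpl all_paths; rewrite map_app, sumR_app, !map_map; simpl.
  - rewrite <- !sumR_scal. rewrite Rplus_comm. f_equal; apply sumR_ext; intros; ring.
  - rewrite <- !sumR_scal. f_equal; apply sumR_ext; intros; ring.
Qed.

Lemma Ex_plus d n sg m F H : Ex d n sg m (fun p => F p + H p) = Ex d n sg m F + Ex d n sg m H.
Proof. unfold Ex. rewrite <- sumR_plus. apply sumR_ext; intros; ring. Qed.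

Lemma Ex_scal d n sg m F c : Ex d n sg m (fun p => c * F p) = c * Ex d n sg m F.
Proof. unfold Ex. rewrite <- sumR_scal. apply sumR_ext; intros; ring. Qed.

Lemma Ex_ext d n sg m F H : (forall p, F p = H p) -> Ex d n sg m F = Ex d n sg m H.
Proof. intros; unfold Ex; apply sumR_ext; intros; rewrite H0; auto. Qed.

Lemma Ex_const d n sg m : (sg = 1 \/ sg = -1)%Z -> Ex d n sg m (fun _ => 1) = 1.
Proof.
  revert sg m; induction n; intros sg m Hs.
  - unfold Ex; simpl; ring.
  - rewrite Ex_step by auto. rewrite (IHn (- sg)%Z), (IHn sg); try lia. ring.
Qed.

Lemma rp_bounds d m : 0 < d -> 0 <= recross_prob d m <= 1.
Proof.
  intros Hd. unfold recross_prob, Rmax. destruct Rle_dec; [lra|].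
  split; [lra|]. assert (0 <= INR m) by apply pos_INR.
  assert ((1 + INR m) / (2 + INR m) <= 1). { apply Rmult_le_reg_r with (2 + INR m); [lra|].
    unfold Rdiv; rewrite Rmult_assoc, Rinv_l by lra. lra. } lra.
Qed.

Lemma walk_nonneg d sg m p : 0 < d -> 0 <= walk_prob_aux d sg m p.
Proof.
  revert sg m; induction p; intros; simpl; [lra|].
  destruct (rp_bounds d m H).
  destruct Z.eqb; [apply Rmult_le_pos; auto|]. destruct Z.eqb; [apply Rmult_le_pos; auto; lra|lra].
Qed.

Lemma Ex_le d n sg m F H : 0 < d -> (forall p, F p <= H p) -> Ex d n sg m F <= Ex d n sg m H.
Proof. intros; unfold Ex; apply sumR_le; intros. apply Rmult_le_compat_l; auto. apply walk_nonneg; auto. Qed.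

Lemma exR_plus (a b : nat -> R) : ex_series a -> ex_series b -> ex_series (fun n => a n + b n).
Proof. intros; apply (ex_series_plus a b); auto. Qed.
Lemma exR_scal (c : R) (a : nat -> R) : ex_series a -> ex_series (fun n => c * a n).
Proof. intros; apply (ex_series_scal_l c a); auto. Qed.

Lemma geo_dom (a : nat -> R) B x : 0 <= x < 1 -> (forall n, Rabs (a n) <= B * x ^ n) ->
  ex_series a /\ Rabs (Series a) <= B / (1 - x).
Proof.
  intros Hx Ha.
  assert (Hg : is_series (fun n => B * x ^ n) (B / (1 - x))).
  { unfold Rdiv. apply (is_series_scal_l B (fun n => x ^ n)). apply is_series_geom.
    rewrite Rabs_right; lra. }
  assert (Habs : ex_series (fun n => Rabs (a n))).
  { apply (ex_series_le (fun n => Rabs (a n)) (fun n => B * x ^ n)).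
    - intros n. change (Rabs (Rabs (a n)) <= B * x ^ n). rewrite Rabs_Rabsolu; auto.
    - eexists; eauto. }
  split. { apply ex_series_Rabs; auto. }
  eapply Rle_trans. apply Series_Rabs; auto.
  rewrite <- (is_series_unique _ _ Hg). apply Series_le.
  - intros; split; [apply Rabs_pos| auto].
  - eexists; eauto.
Qed.

Lemma tele (u : nat -> R) : is_lim_seq u 0 -> is_series (fun j => u j - u (S j)) (u 0%nat).
Proof.
  intros Hu. unfold is_series.
  change (is_lim_seq (sum_n (fun j => u j - u (S j))) (u 0%nat)).
  apply is_lim_seq_ext with (fun n => u 0%nat - u (S n)).
  { induction n. rewrite sum_O; auto. rewrite sum_Sn, <- IHn. change (plus ?a ?b) with (a + b). ring. }
  pose proof (is_lim_seq_minus' _ _ _ _ (is_lim_seq_const (u 0%nat)) (proj1 (is_lim_seq_incr_1 u 0) Hu)) as H.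
  rewrite Rminus_0_r in H. exact H.
Qed.

Lemma Series_shift1 (a : nat -> R) : ex_series a -> Series a = a 0%nat + Series (fun k => a (S k)).
Proof. apply Series_incr_1. Qed.

Definition tls (a : nat -> R) (k : nat) : R := Series (fun i => a (k + i)%nat).

Lemma tl_S a k : ex_series (fun i => a (k + i)%nat) -> tls a k = a k + tls a (S k).
Proof.
  intros H. unfold tls. rewrite Series_shift1 by auto. rewrite Nat.add_0_r. f_equal.
  apply Series_ext; intros; f_equal; lia.
Qed.

Definition rk d k := recross_prob d (S k).

Lemma frac_bounds k : 2/3 <= (2 + INR k) / (3 + INR k) < 1.
Proof.
  assert (0 <= INR k) by apply pos_INR.
  replace ((2 + INR k) / (3 + INR k)) with (1 - / (3 + INR k)) by (field; lra).
  assert (0 < / (3 + INR k)) by (apply Rinv_0_lt_compat; lra).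
  assert (/ (3 + INR k) <= / 3) by (apply Rinv_le_contravar; lra). lra.
Qed.

Lemma rk_val d k : 0 < d < 2/3 -> rk d k = (2 + INR k) / (3 + INR k) - d.
Proof.
  intros Hd. unfold rk, recross_prob. rewrite S_INR.
  replace (1 + (INR k + 1)) with (2 + INR k) by ring. replace (2 + (INR k + 1)) with (3 + INR k) by ring.
  pose proof (frac_bounds k). unfold Rmax; destruct Rle_dec; lra.
Qed.

Lemma rk_bounds d k : 0 < d < 2/3 -> 0 < rk d k <= 1 - d.
Proof. intros Hd. rewrite rk_val by auto. pose proof (frac_bounds k). lra. Qed.

Fixpoint T d k := match k with O => 1 | S k' => T d k' * rk d k' end.

Lemma T_pos d k : 0 < d < 2/3 -> 0 < T d k.
Proof. intros Hd; induction k; simpl; [lra|]. apply Rmult_lt_0_compat; auto. apply rk_bounds; auto. Qed.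

Lemma T_geo d k i : 0 < d < 2/3 -> T d (k + i) <= T d k * (1 - d) ^ i.
Proof.
  intros Hd; induction i. rewrite Nat.add_0_r; simpl; lra.
  rewrite Nat.add_succ_r; simpl. pose proof (rk_bounds d (k+i) Hd). pose proof (T_pos d (k+i) Hd).
  apply Rle_trans with (T d k * (1-d)^i * (1-d)). apply Rmult_le_compat; lra. lra.
Qed.

Lemma T_le d k : 0 < d < 2/3 -> T d k <= (1 - d) ^ k.
Proof. intros Hd. pose proof (T_geo d 0 k Hd). simpl in H. lra. Qed.

Lemma T_dec d k : 0 < d < 2/3 -> T d (S k) <= T d k.
Proof. intros Hd; simpl. pose proof (rk_bounds d k Hd). pose proof (T_pos d k Hd). nra. Qed.

Lemma geo_lt d : 0 < d < 2/3 -> 0 <= 1 - d < 1.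
Proof. lra. Qed.

Lemma T_lim d : 0 < d < 2/3 -> is_lim_seq (T d) 0.
Proof.
  intros Hd. apply is_lim_seq_le_le with (fun _ => 0) (fun n => (1 - d) ^ n).
  - intros; split; [left; apply T_pos; auto| apply T_le; auto].
  - apply is_lim_seq_const.
  - apply is_lim_seq_geom. rewrite Rabs_right; lra.
Qed.

Definition ff d j := T d j - T d (S j).

Lemma f_bounds d j : 0 < d < 2/3 -> 0 <= ff d j <= T d j.
Proof. intros Hd; unfold ff. pose proof (T_dec d j Hd). pose proof (T_pos d (S j) Hd). lra. Qed.

Lemma domT d (a : nat -> R) C : 0 < d < 2/3 -> (forall n, Rabs (a n) <= C * T d n) ->
  ex_series a /\ Rabs (Series a) <= C / d.
Proof.
  intros Hd Ha. assert (HC : 0 <= C).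
  { specialize (Ha 0%nat). simpl in Ha. pose proof (Rabs_pos (a 0%nat)). lra. }
  destruct (geo_dom a C (1 - d)) as [H1 H2]; [lra| |].
  - intros n. eapply Rle_trans; [apply Ha|]. apply Rmult_le_compat_l; auto. apply T_le; auto.
  - split; auto. replace (1 - (1 - d)) with d in H2 by ring. auto.
Qed.

Lemma domT_tl d (a : nat -> R) C k : 0 < d < 2/3 -> (forall n, Rabs (a n) <= C * T d n) ->
  ex_series (fun i => a (k + i)%nat) /\ Rabs (tls a k) <= C * T d k / d.
Proof.
  intros Hd Ha. assert (HC : 0 <= C).
  { specialize (Ha 0%nat). simpl in Ha. pose proof (Rabs_pos (a 0%nat)). lra. }
  destruct (geo_dom (fun i => a (k+i)%nat) (C * T d k) (1 - d)) as [H1 H2]; [lra| |].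
  - intros n. eapply Rle_trans; [apply Ha|]. rewrite Rmult_assoc. apply Rmult_le_compat_l; auto. apply T_geo; auto.
  - split; auto. replace (1 - (1 - d)) with d in H2 by ring. auto.
Qed.

Definition ev d j := if Nat.even j then ff d j else 0.
Definition od d j := if Nat.odd j then ff d j else 0.
Definition p d := Series (ev d).
Definition q d := Series (od d).
Definition mu d := Series (T d).

Lemma ex_ev d : 0 < d < 2/3 -> ex_series (ev d).
Proof. intros Hd. apply (domT d _ 1 Hd). intros n; unfold ev. destruct (f_bounds d n Hd).
  destruct Nat.even; rewrite ?Rabs_R0, ?Rabs_right; lra. Qed.
Lemma ex_od d : 0 < d < 2/3 -> ex_series (od d).
Proof. intros Hd. apply (domT d _ 1 Hd). intros n; unfold od. destruct (f_bounds d n Hd).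
  destruct Nat.odd; rewrite ?Rabs_R0, ?Rabs_right; lra. Qed.
Lemma ex_f d : 0 < d < 2/3 -> ex_series (ff d).
Proof. intros Hd. apply (domT d _ 1 Hd). intros n. destruct (f_bounds d n Hd). rewrite Rabs_right; lra. Qed.
Lemma ex_T d : 0 < d < 2/3 -> ex_series (T d).
Proof. intros Hd. apply (domT d _ 1 Hd). intros n. pose proof (T_pos d n Hd). rewrite Rabs_right; lra. Qed.
Lemma ex_TS d : 0 < d < 2/3 -> ex_series (fun j => T d (S j)).
Proof. intros Hd. apply (proj1 (ex_series_incr_1 (T d))), ex_T; auto. Qed.

Lemma sum_f d : 0 < d < 2/3 -> Series (ff d) = 1.
Proof. intros Hd. apply is_series_unique. apply (tele (T d)). apply T_lim; auto. Qed.

Lemma p_plus_q d : 0 < d < 2/3 -> p d + q d = 1.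
Proof.
  intros Hd. unfold p, q. rewrite <- Series_plus by (apply ex_ev || apply ex_od; auto).
  rewrite <- (sum_f d Hd). apply Series_ext. intros n; unfold ev, od. rewrite <- Nat.negb_even.
  destruct Nat.even; simpl; ring.
Qed.

Lemma Series_nonneg (a : nat -> R) : (forall n, 0 <= a n) -> ex_series a -> 0 <= Series a.
Proof. intros. rewrite <- (Rmult_0_l (Series a)), <- Series_scal_l. apply Series_le; auto. intros; specialize (H n); lra. Qed.

Lemma pow_m1 j : (-1) ^ j = if Nat.even j then 1 else -1.
Proof. induction j; [simpl; auto|]. change ((-1)^(S j)) with (-1 * (-1)^j). rewrite Nat.even_succ, <- Nat.negb_even, IHj. destruct Nat.even; simpl; ring. Qed.

Lemma pow_m1_sq j : (-1) ^ j * (-1) ^ j = 1.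
Proof. rewrite pow_m1; destruct Nat.even; ring. Qed.

Lemma Rabs_m1 j x : Rabs ((-1) ^ j * x) = Rabs x.
Proof. rewrite Rabs_mult, pow_m1. destruct Nat.even; rewrite ?Rabs_R1, ?Rabs_m1; ring. Qed.

Lemma rk0 d : 0 < d < 2/3 -> rk d 0 = 2/3 - d.
Proof. intros; rewrite rk_val by auto; simpl; field. Qed.
Lemma rk1 d : 0 < d < 2/3 -> rk d 1 = 3/4 - d.
Proof. intros; rewrite rk_val by auto; simpl; field. Qed.

Lemma p_low d : 0 < d < 2/3 -> 1/3 + d <= p d.
Proof.
  intros Hd. unfold p. rewrite Series_shift1 by (apply ex_ev; auto).
  assert (0 <= Series (fun k => ev d (S k))).
  { apply Series_nonneg. intros n; unfold ev; destruct Nat.even; [apply f_bounds; auto| lra].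
    apply (proj1 (ex_series_incr_1 (ev d))), ex_ev; auto. }
  unfold ev at 1; simpl. unfold ff; simpl. rewrite rk0 by auto. lra.
Qed.

Lemma q_low d : 0 < d < 2/3 -> (2/3 - d) * (1/4 + d) <= q d.
Proof.
  intros Hd. unfold q. rewrite Series_shift1 by (apply ex_od; auto).
  rewrite Series_shift1 by (apply (proj1 (ex_series_incr_1 (od d))), ex_od; auto).
  assert (0 <= Series (fun k => od d (S (S k)))).
  { apply Series_nonneg. intros n; unfold od; destruct Nat.odd; [apply f_bounds; auto| lra].
    apply (proj1 (ex_series_incr_1 (fun k => od d (S k)))), (proj1 (ex_series_incr_1 (od d))), ex_od; auto. }
  unfold od at 1 2; simpl. unfold ff; simpl. rewrite rk0, rk1 by auto. lra.
Qed.

Lemma q_pos d : 0 < d < 2/3 -> 0 < q d.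
Proof. intros Hd. pose proof (q_low d Hd). nra. Qed.
Lemma p_pos d : 0 < d < 2/3 -> 0 < p d.
Proof. intros Hd. pose proof (p_low d Hd). lra. Qed.

Lemma mu_ge1 d : 0 < d < 2/3 -> 1 <= mu d.
Proof.
  intros Hd. unfold mu. rewrite Series_shift1 by (apply ex_T; auto). change (T d 0) with 1.
  assert (0 <= Series (fun k => T d (S k))). { apply Series_nonneg. intros; left; apply T_pos; auto. apply ex_TS; auto. }
  lra.
Qed.

Lemma ex_altT d : 0 < d < 2/3 -> ex_series (fun j => (-1) ^ j * T d j).
Proof. intros Hd. apply (domT d _ 1 Hd). intros n. rewrite Rabs_m1. pose proof (T_pos d n Hd). rewrite Rabs_right; lra. Qed.
Lemma ex_altTS d : 0 < d < 2/3 -> ex_series (fun j => (-1) ^ j * T d (S j)).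
Proof. intros Hd. apply (domT d _ 1 Hd). intros n. rewrite Rabs_m1. pose proof (T_pos d (S n) Hd).
  pose proof (T_dec d n Hd). rewrite Rabs_right; lra. Qed.

Lemma alt_f d : 0 < d < 2/3 -> Series (fun j => (-1) ^ j * ff d j) = p d - q d.
Proof.
  intros Hd. unfold p, q. rewrite <- Series_minus by (apply ex_ev || apply ex_od; auto).
  apply Series_ext. intros n; unfold ev, od. rewrite pow_m1, <- Nat.negb_even.
  destruct Nat.even; simpl; ring.
Qed.

Lemma alt_TS d : 0 < d < 2/3 -> Series (fun j => (-1) ^ j * T d (S j)) = q d.
Proof.
  intros Hd. set (A := Series (fun j => (-1) ^ j * T d (S j))).
  assert (HX : Series (fun j => (-1) ^ j * T d j) = 1 - A).
  { rewrite Series_shift1 by (apply ex_altT; auto). simpl.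
    replace (Series (fun k => (-1) * (-1) ^ k * (T d k * rk d k))) with (- A).
    ring. unfold A. rewrite <- Series_opp. apply Series_ext; intros; simpl; ring. }
  assert (HF : Series (fun j => (-1) ^ j * ff d j) = (1 - A) - A).
  { rewrite <- HX. unfold A. rewrite <- Series_minus by (apply ex_altT || apply ex_altTS; auto).
    apply Series_ext; intros; unfold ff; ring. }
  rewrite alt_f in HF by auto. pose proof (p_plus_q d Hd). lra.
Qed.

Definition g1 d := p d / (2 * q d).
Definition b d j := ff d j * g1 d - T d (S j).
Definition aalt d j := (-1) ^ j * b d j.
Definition G d k := (-1) ^ k * tls (aalt d) k.
Definition g d k := G d k / T d k.

Lemma g1_nonneg d : 0 < d < 2/3 -> 0 <= g1 d.
Proof. intros Hd. unfold g1. pose proof (p_pos d Hd). pose proof (q_pos d Hd).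
  apply Rle_mult_inv_pos; lra. Qed.

Lemma b_bound d j : 0 < d < 2/3 -> Rabs (b d j) <= (g1 d + 1) * T d j.
Proof.
  intros Hd. unfold b. pose proof (f_bounds d j Hd). pose proof (g1_nonneg d Hd).
  pose proof (T_dec d j Hd). pose proof (T_pos d (S j) Hd).
  apply Rabs_le. split; nra.
Qed.

Lemma aalt_bound d j : 0 < d < 2/3 -> Rabs (aalt d j) <= (g1 d + 1) * T d j.
Proof. intros Hd. unfold aalt. rewrite Rabs_m1. apply b_bound; auto. Qed.

Lemma G_rec d k : 0 < d < 2/3 -> G d k + G d (S k) = b d k.
Proof.
  intros Hd. unfold G. destruct (domT_tl d (aalt d) _ k Hd (fun j => aalt_bound d j Hd)) as [Hex _].
  rewrite (tl_S _ _ Hex). unfold aalt. simpl.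
  replace ((-1) ^ k * ((-1) ^ k * b d k + tls (fun j => (-1) ^ j * b d j) (S k)) +
    -1 * (-1) ^ k * tls (fun j => (-1) ^ j * b d j) (S k)) with ((-1)^k * (-1)^k * b d k) by ring.
  rewrite pow_m1_sq; ring.
Qed.

Lemma G_bound d k : 0 < d < 2/3 -> Rabs (G d k) <= (g1 d + 1) / d * T d k.
Proof.
  intros Hd. unfold G. rewrite Rabs_m1. destruct (domT_tl d (aalt d) _ k Hd (fun j => aalt_bound d j Hd)) as [_ H].
  eapply Rle_trans; [apply H|]. right; field. lra.
Qed.

Lemma G0 d : 0 < d < 2/3 -> G d 0 = g1 d - 1.
Proof.
  intros Hd. unfold G. simpl. rewrite Rmult_1_l. unfold tls. simpl.
  assert (Hb : Series (fun i => aalt d i) = g1 d * (p d - q d) - q d).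
  { rewrite <- alt_f, <- alt_TS, <- Series_scal_l by auto. rewrite <- Series_minus.
    apply Series_ext; intros; unfold aalt, b; ring.
    apply exR_scal. apply (domT d _ 1 Hd). intros n. rewrite Rabs_m1. destruct (f_bounds d n Hd). rewrite Rabs_right; lra.
    apply ex_altTS; auto. }
  rewrite Hb. unfold g1. pose proof (q_pos d Hd). pose proof (p_plus_q d Hd).
  replace (p d) with (1 - q d) by lra. field. lra.
Qed.

Lemma g_bound d k : 0 < d < 2/3 -> Rabs (g d k) <= (g1 d + 1) / d.
Proof.
  intros Hd. unfold g. pose proof (T_pos d k Hd). unfold Rdiv at 1. rewrite Rabs_mult, Rabs_inv, (Rabs_right (T d k)) by lra.
  apply Rmult_le_reg_r with (T d k); auto. rewrite Rmult_assoc, Rinv_l by lra. rewrite Rmult_1_r.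
  apply G_bound; auto.
Qed.

Lemma g_eq d k : 0 < d < 2/3 -> g d k = rk d k * (-1 - g d (S k)) + (1 - rk d k) * (1 + g d 0).
Proof.
  intros Hd. unfold g. simpl T. rewrite G0 by auto. pose proof (G_rec d k Hd). unfold b, ff in H. simpl T in H.
  replace (G d k) with ((T d k * g1 d - T d k * rk d k * g1 d - T d k * rk d k) - G d (S k)) by lra.
  pose proof (T_pos d k Hd). pose proof (rk_bounds d k Hd). field. lra.
Qed.

Lemma ex_G d : 0 < d < 2/3 -> ex_series (G d).
Proof. intros Hd. apply (domT d _ ((g1 d + 1)/d) Hd). intros; apply G_bound; auto. Qed.

Lemma sum_G d : 0 < d < 2/3 -> 2 * Series (G d) = 2 * g1 d - mu d.
Proof.
  intros Hd.
  assert (H1 : Series (fun k => G d k + G d (S k)) = Series (b d)).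
  { apply Series_ext; intros; apply G_rec; auto. }
  rewrite Series_plus in H1 by (apply ex_G || apply (proj1 (ex_series_incr_1 (G d))), ex_G; auto).
  assert (H2 : Series (G d) = G d 0 + Series (fun k => G d (S k))) by (apply Series_shift1, ex_G; auto).
  assert (H3 : Series (b d) = g1 d * 1 - (mu d - 1)).
  { unfold b.
    assert (E1 : Series (fun j => ff d j * g1 d - T d (S j)) = Series (fun j => g1 d * ff d j) - Series (fun j => T d (S j))).
    { rewrite <- Series_minus. apply Series_ext; intros; ring.
      apply exR_scal, ex_f; auto. apply ex_TS; auto. }
    rewrite E1, Series_scal_l. rewrite (sum_f d Hd).
    unfold mu. rewrite (Series_shift1 (T d)) by (apply ex_T; auto). change (T d 0) with 1. ring. }
  rewrite G0 in H2 by auto. lra.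
Qed.

Definition c d := p d / (q d * mu d).
Definition h d k := 1 + 2 * g d k.
Definition w d j := T d j * (h d j - c d).
Definition psi d k := tls (w d) k / T d k.

Lemma c_pos d : 0 < d < 2/3 -> 0 < c d.
Proof. intros Hd. unfold c. pose proof (p_pos d Hd). pose proof (q_pos d Hd). pose proof (mu_ge1 d Hd).
  apply Rdiv_lt_0_compat; nra. Qed.

Definition Bg d := (g1 d + 1) / d.

Lemma w_bound d j : 0 < d < 2/3 -> Rabs (w d j) <= (1 + 2 * Bg d + c d) * T d j.
Proof.
  intros Hd. unfold w, h. pose proof (T_pos d j Hd). pose proof (g_bound d j Hd). pose proof (c_pos d Hd).
  rewrite Rabs_mult, Rabs_right by lra. rewrite Rmult_comm. apply Rmult_le_compat_r; [lra|].
  unfold Bg. apply Rabs_le. apply Rabs_le_between in H0. lra.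
Qed.

Lemma sum_w d : 0 < d < 2/3 -> Series (w d) = 0.
Proof.
  intros Hd.
  assert (Series (w d) = Series (fun j => (1 - c d) * T d j + 2 * G d j)).
  { apply Series_ext; intros j. unfold w, h, g. pose proof (T_pos d j Hd). field. lra. }
  rewrite H, Series_plus. rewrite !Series_scal_l. pose proof (sum_G d Hd).
  fold (mu d). unfold c, g1. pose proof (q_pos d Hd). pose proof (mu_ge1 d Hd).
  replace (2 * Series (G d)) with (2 * g1 d - mu d) by lra. unfold g1. field. lra.
  apply exR_scal, ex_T; auto. apply exR_scal, ex_G; auto.
Qed.

Definition Bpsi d := (1 + 2 * Bg d + c d) / d.

Lemma psi_bound d k : 0 < d < 2/3 -> Rabs (psi d k) <= Bpsi d.
Proof.
  intros Hd. unfold psi. destruct (domT_tl d (w d) _ k Hd (fun j => w_bound d j Hd)) as [_ H].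
  pose proof (T_pos d k Hd). unfold Rdiv at 1. rewrite Rabs_mult, Rabs_inv, (Rabs_right (T d k)) by lra.
  apply Rmult_le_reg_r with (T d k); auto. rewrite Rmult_assoc, Rinv_l by lra. rewrite Rmult_1_r.
  eapply Rle_trans; [apply H|]. unfold Bpsi. right; field. lra.
Qed.

Lemma psi0 d : 0 < d < 2/3 -> psi d 0 = 0.
Proof. intros Hd. unfold psi, tls. simpl. rewrite <- (sum_w d Hd). unfold Rdiv; rewrite Rinv_1, Rmult_1_r. reflexivity. Qed.

Lemma psi_eq d k : 0 < d < 2/3 ->
  psi d k - (rk d k * psi d (S k) + (1 - rk d k) * psi d 0) = h d k - c d.
Proof.
  intros Hd. rewrite psi0 by auto. unfold psi. destruct (domT_tl d (w d) _ k Hd (fun j => w_bound d j Hd)) as [Hex _].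
  rewrite (tl_S _ _ Hex). simpl T. unfold w. pose proof (T_pos d k Hd). pose proof (rk_bounds d k Hd). field. lra.
Qed.

Definition gm d m := g d (pred m).
Definition hm d m := h d (pred m).
Definition psim d m := psi d (pred m).
Definition rr d m := recross_prob d m.
Definition Kpsi d m := rr d m * psim d (S m) + (1 - rr d m) * psim d 1.

Fixpoint Zfun d (sg : Z) (m : nat) (p : list Z) : R :=
  match p with
  | [] => IZR (Z.sgn sg) * gm d m
  | s :: rest => IZR s + Zfun d s (if Z.eqb s (- sg) then S m else 1%nat) rest
  end.

Lemma Ex_affine d n sg m a F : (sg = 1 \/ sg = -1)%Z ->
  Ex d n sg m (fun p => a + F p) = a + Ex d n sg m F.
Proof.
  intros Hs. rewrite Ex_plus. f_equal. transitivity (a * Ex d n sg m (fun _ => 1)).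
  rewrite <- Ex_scal; apply Ex_ext; intros; ring. rewrite Ex_const; auto; ring.
Qed.

Lemma rr_rk d k : rr d (S k) = rk d k.
Proof. reflexivity. Qed.

Lemma gm_eq d m : 0 < d < 2/3 -> (1 <= m)%nat ->
  gm d m = rr d m * (-1 - gm d (S m)) + (1 - rr d m) * (1 + gm d 1).
Proof. intros Hd Hm. destruct m; [lia|]. unfold gm; simpl pred. apply g_eq; auto. Qed.

Lemma Zcons_opp d sg m p : (sg = 1 \/ sg = -1)%Z ->
  Zfun d sg m ((- sg)%Z :: p) = IZR (- sg) + Zfun d (- sg) (S m) p.
Proof. intros; simpl. rewrite Z.eqb_refl. reflexivity. Qed.

Lemma Zcons_same d sg m p : (sg = 1 \/ sg = -1)%Z ->
  Zfun d sg m (sg :: p) = IZR sg + Zfun d sg 1 p.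
Proof. intros [-> | ->]; simpl; reflexivity. Qed.

Lemma Z_mean d n : 0 < d < 2/3 -> forall sg m, (sg = 1 \/ sg = -1)%Z -> (1 <= m)%nat ->
  Ex d n sg m (Zfun d sg m) = IZR sg * gm d m.
Proof.
  intros Hd; induction n; intros sg m Hs Hm.
  - unfold Ex; simpl. destruct Hs as [-> | ->]; simpl; ring.
  - rewrite Ex_step by auto.
    rewrite (Ex_ext _ _ _ _ _ (fun p => IZR (- sg) + Zfun d (- sg) (S m) p)) by (intros; apply Zcons_opp; auto).
    rewrite (Ex_ext _ _ _ _ (fun p => Zfun d sg m (sg :: p)) (fun p => IZR sg + Zfun d sg 1 p)) by (intros; apply Zcons_same; auto).
    rewrite !Ex_affine by lia. rewrite IHn, IHn by lia.
    rewrite (gm_eq d m Hd Hm). fold (rr d m). rewrite opp_IZR. ring.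
Qed.

Fixpoint Q d n m : R :=
  match n with
  | O => gm d m ^ 2
  | S n' => rr d m * (hm d (S m) + Q d n' (S m)) + (1 - rr d m) * (hm d 1%nat + Q d n' 1%nat)
  end.

Lemma sg_sq sg : (sg = 1 \/ sg = -1)%Z -> IZR sg * IZR sg = 1.
Proof. intros [-> | ->]; simpl; ring. Qed.

Lemma Z_sq d n : 0 < d < 2/3 -> forall sg m, (sg = 1 \/ sg = -1)%Z -> (1 <= m)%nat ->
  Ex d n sg m (fun p => Zfun d sg m p ^ 2) = Q d n m.
Proof.
  intros Hd; induction n; intros sg m Hs Hm.
  - unfold Ex; simpl. destruct Hs as [-> | ->]; simpl; ring.
  - rewrite Ex_step by auto.
    rewrite (Ex_ext _ _ _ _ _ (fun p => 1 + (2 * IZR (- sg) * Zfun d (- sg) (S m) p + Zfun d (- sg) (S m) p ^ 2))).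
    2:{ intros; rewrite Zcons_opp by auto. pose proof (sg_sq (- sg) ltac:(lia)). simpl. nra. }
    rewrite (Ex_ext _ _ _ _ (fun p => Zfun d sg m (sg :: p) ^ 2) (fun p => 1 + (2 * IZR sg * Zfun d sg 1 p + Zfun d sg 1 p ^ 2))).
    2:{ intros; rewrite Zcons_same by auto. pose proof (sg_sq sg Hs). simpl. nra. }
    rewrite !Ex_affine, !Ex_plus, !Ex_scal by lia.
    rewrite !Z_mean, !IHn by (auto; lia).
    simpl. fold (rr d m). unfold hm, gm; simpl pred.
    pose proof (sg_sq sg Hs). rewrite opp_IZR.
    replace (2 * - IZR sg * (- IZR sg * g d m)) with (2 * g d m * (IZR sg * IZR sg)) by ring.
    replace (2 * IZR sg * (IZR sg * g d 0)) with (2 * g d 0 * (IZR sg * IZR sg)) by ring.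
    rewrite H. unfold h. ring.
Qed.

Lemma Kpsi_id d x : 0 < d < 2/3 -> (1 <= x)%nat -> hm d x - c d - psim d x = - Kpsi d x.
Proof.
  intros Hd Hx. destruct x; [lia|]. unfold hm, psim, Kpsi; simpl pred. rewrite rr_rk.
  pose proof (psi_eq d x Hd). unfold psim; simpl pred. lra.
Qed.

Lemma Kpsi_bound d m : 0 < d < 2/3 -> Rabs (Kpsi d m) <= Bpsi d.
Proof.
  intros Hd. unfold Kpsi, psim. pose proof (psi_bound d (pred (S m)) Hd). pose proof (psi_bound d (pred 1) Hd).
  pose proof (rp_bounds d m (proj1 Hd)). fold (rr d m) in H1.
  apply Rabs_le. apply Rabs_le_between in H. apply Rabs_le_between in H0. nra.
Qed.

Definition BQ d := Bg d ^ 2 + Bpsi d.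

Lemma Bg_nonneg d : 0 < d < 2/3 -> 0 <= Bg d.
Proof. intros Hd. pose proof (g_bound d 0 Hd). pose proof (Rabs_pos (g d 0)). unfold Bg; lra. Qed.

Lemma Q_bound d n : 0 < d < 2/3 -> forall m, (1 <= m)%nat ->
  Rabs (Q d n m - INR n * c d - Kpsi d m) <= BQ d.
Proof.
  intros Hd; induction n; intros m Hm.
  - simpl. unfold BQ. pose proof (Kpsi_bound d m Hd). pose proof (g_bound d (pred m) Hd).
    fold (gm d m) in H0. fold (Bg d) in H0. pose proof (Bg_nonneg d Hd).
    apply Rabs_le_between in H. apply Rabs_le_between in H0.
    assert (0 <= (Bg d - gm d m) * (Bg d + gm d m)) by (apply Rmult_le_pos; lra).
    assert (0 <= gm d m * gm d m) by apply Rle_0_sqr.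
    replace (gm d m * (gm d m * 1)) with (gm d m * gm d m) by ring.
    replace (Bg d ^ 2) with (Bg d * Bg d) by ring.
    assert (gm d m * gm d m <= Bg d * Bg d).
    { replace (Bg d * Bg d) with ((Bg d - gm d m) * (Bg d + gm d m) + gm d m * gm d m) by ring. lra. }
    apply Rabs_le. lra.
  - simpl Q. pose proof (Kpsi_id d (S m) Hd ltac:(lia)). pose proof (Kpsi_id d 1 Hd ltac:(lia)).
    replace (rr d m * (hm d (S m) + Q d n (S m)) + (1 - rr d m) * (hm d 1 + Q d n 1) - INR (S n) * c d - Kpsi d m)
      with (rr d m * (Q d n (S m) - INR n * c d - Kpsi d (S m)) + (1 - rr d m) * (Q d n 1 - INR n * c d - Kpsi d 1)).
    2:{ assert (HK : Kpsi d m = rr d m * psim d (S m) + (1 - rr d m) * psim d 1) by reflexivity.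
        rewrite HK. replace (hm d (S m)) with (c d + psim d (S m) - Kpsi d (S m)) by lra.
        replace (hm d 1%nat) with (c d + psim d 1 - Kpsi d 1) by lra. rewrite S_INR. ring. }
    pose proof (IHn (S m) ltac:(lia)). pose proof (IHn 1%nat ltac:(lia)).
    pose proof (rp_bounds d m (proj1 Hd)). fold (rr d m) in H3.
    apply Rabs_le_between in H1. apply Rabs_le_between in H2. apply Rabs_le. nra.
Qed.

Lemma Zdiff d : 0 < d < 2/3 -> forall p sg m, Rabs (Zfun d sg m p - IZR (endpoint p)) <= Bg d.
Proof.
  intros Hd p0; induction p0 as [|a rest IHp]; intros sg m.
  - simpl. rewrite Rminus_0_r, Rabs_mult. pose proof (g_bound d (pred m) Hd). fold (gm d m) in H. fold (Bg d) in H.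
    pose proof (Rabs_pos (gm d m)).
    assert (Rabs (IZR (Z.sgn sg)) <= 1) by (destruct sg; simpl; unfold Rabs; destruct Rcase_abs; lra).
    pose proof (Rabs_pos (IZR (Z.sgn sg))). nra.
  - simpl. unfold endpoint in *. simpl. rewrite plus_IZR.
    replace (IZR a + Zfun d a (if (a =? - sg)%Z then S m else 1%nat) rest - (IZR a + IZR (fold_right Z.add 0%Z rest)))
      with (Zfun d a (if (a =? - sg)%Z then S m else 1%nat) rest - IZR (fold_right Z.add 0%Z rest)) by ring.
    apply IHp.
Qed.

Lemma sq_cmp e z B eps : Rabs (e - z) <= B -> 0 < eps ->
  Rabs (e ^ 2 - z ^ 2) <= eps * z ^ 2 + B ^ 2 * (1 + / eps).
Proof.
  intros H He. set (u := e - z). replace e with (z + u) by (unfold u; ring).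
  assert (Hu : u ^ 2 <= B ^ 2). { unfold u. rewrite <- (pow2_abs (e - z)). pose proof (Rabs_pos (e-z)).
    apply pow_incr; lra. }
  assert (H1 : 0 <= (eps * z - u) ^ 2 / eps) by (apply Rdiv_le_0_compat; [apply pow2_ge_0|lra]).
  assert (H2 : 0 <= (eps * z + u) ^ 2 / eps) by (apply Rdiv_le_0_compat; [apply pow2_ge_0|lra]).
  replace ((eps * z - u) ^ 2 / eps) with (eps * z ^ 2 + u ^ 2 / eps - 2 * u * z) in H1 by (field; lra).
  replace ((eps * z + u) ^ 2 / eps) with (eps * z ^ 2 + u ^ 2 / eps + 2 * u * z) in H2 by (field; lra).
  assert (H3 : u ^ 2 / eps <= B ^ 2 / eps) by (apply Rmult_le_compat_r; [left; apply Rinv_0_lt_compat; lra| auto]).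
  assert (0 <= u ^ 2) by apply pow2_ge_0.
  apply Rabs_le. unfold Rdiv in *. split; nra.
Qed.

Lemma ES2_expand d n : ES2 d (S n) =
  / 2 * Ex d n 1 1 (fun p => IZR (endpoint (1%Z :: p)) ^ 2) +
  / 2 * Ex d n (-1) 1 (fun p => IZR (endpoint ((-1)%Z :: p)) ^ 2).
Proof.
  unfold ES2, Ex. simpl all_paths. rewrite map_app, sumR_app, !map_map. rewrite <- !sumR_scal.
  f_equal; apply sumR_ext; intros; simpl; ring.
Qed.

Definition Y d n := hm d 1 + Q d n 1.

Lemma Ztot_sq d n s : 0 < d < 2/3 -> (s = 1 \/ s = -1)%Z ->
  Ex d n s 1 (fun p => (IZR s + Zfun d s 1 p) ^ 2) = Y d n.
Proof.
  intros Hd Hs.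
  rewrite (Ex_ext _ _ _ _ _ (fun p => 1 + (2 * IZR s * Zfun d s 1 p + Zfun d s 1 p ^ 2))).
  2:{ intros. pose proof (sg_sq s Hs). simpl. nra. }
  rewrite Ex_affine, Ex_plus, Ex_scal by auto. rewrite Z_mean, Z_sq by (auto; lia).
  unfold Y, hm, h, gm. simpl pred. pose proof (sg_sq s Hs).
  replace (2 * IZR s * (IZR s * g d 0)) with (2 * g d 0 * (IZR s * IZR s)) by ring. rewrite H. ring.
Qed.

Lemma ES2_cmp d n eps : 0 < d < 2/3 -> 0 < eps ->
  (1 - eps) * Y d n - Bg d ^ 2 * (1 + / eps) <= ES2 d (S n) <= (1 + eps) * Y d n + Bg d ^ 2 * (1 + / eps).
Proof.
  intros Hd He. set (K := Bg d ^ 2 * (1 + / eps)).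
  assert (Hs : forall s, (s = 1 \/ s = -1)%Z ->
    (1 - eps) * Y d n - K <= Ex d n s 1 (fun p => IZR (endpoint (s :: p)) ^ 2) <= (1 + eps) * Y d n + K).
  { intros s Hs. rewrite <- (Ztot_sq d n s Hd Hs).
    assert (Hp : forall p, Rabs (IZR (endpoint (s :: p)) ^ 2 - (IZR s + Zfun d s 1 p) ^ 2) <= eps * (IZR s + Zfun d s 1 p) ^ 2 + K).
    { intros p. apply sq_cmp; auto. unfold endpoint; simpl; rewrite plus_IZR.
      replace (IZR s + IZR (fold_right Z.add 0%Z p) - (IZR s + Zfun d s 1 p)) with (- (Zfun d s 1 p - IZR (endpoint p))) by (unfold endpoint; ring).
      rewrite Rabs_Ropp. apply Zdiff; auto. }
    split.
    - rewrite Rmult_minus_distr_r, Rmult_1_l.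
      transitivity (Ex d n s 1 (fun p => - K + (1 - eps) * (IZR s + Zfun d s 1 p) ^ 2)).
      + rewrite Ex_affine, Ex_scal by auto. lra.
      + apply Ex_le; [lra|]. intros p. specialize (Hp p). apply Rabs_le_between in Hp. lra.
    - transitivity (Ex d n s 1 (fun p => K + (1 + eps) * (IZR s + Zfun d s 1 p) ^ 2)).
      + apply Ex_le; [lra|]. intros p. specialize (Hp p). apply Rabs_le_between in Hp. lra.
      + rewrite Ex_affine, Ex_scal by auto. lra. }
  rewrite ES2_expand. destruct (Hs 1%Z ltac:(lia)). destruct (Hs (-1)%Z ltac:(lia)). lra.
Qed.

Lemma Y_bound d n : 0 < d < 2/3 -> Rabs (Y d n - INR n * c d) <= BQ d + Bpsi d + Rabs (hm d 1).
Proof.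
  intros Hd. unfold Y. pose proof (Q_bound d n Hd 1%nat ltac:(lia)). pose proof (Kpsi_bound d 1 Hd).
  apply Rabs_le_between in H. apply Rabs_le_between in H0. pose proof (proj1 (Rabs_le_between (hm d 1) _) (Rle_refl _)).
  apply Rabs_le. lra.
Qed.

Lemma ES2_lim d : 0 < d < 2/3 -> Un_cv (fun N => ES2 d N / INR N) (c d).
Proof.
  intros Hd eta Heta. pose proof (c_pos d Hd) as Hc.
  set (eps := Rmin 1 (eta / (2 * (c d + 1)))).
  assert (He1 : eps <= 1) by apply Rmin_l. assert (He2 : eps <= eta / (2 * (c d + 1))) by apply Rmin_r.
  assert (He0 : 0 < eps). { apply Rmin_pos; [lra|]. apply Rdiv_lt_0_compat; lra. }
  assert (Hec : eps * c d <= eta / 2).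
  { apply Rle_trans with (eta / (2 * (c d + 1)) * c d). apply Rmult_le_compat_r; lra.
    apply Rmult_le_reg_r with (2 * (c d + 1)); [lra|]. field_simplify; [nra|lra]. }
  set (B1 := BQ d + Bpsi d + Rabs (hm d 1)).
  set (K := Bg d ^ 2 * (1 + / eps)).
  assert (HK : 0 <= K). { unfold K. apply Rmult_le_pos. apply pow2_ge_0. pose proof (Rinv_0_lt_compat eps He0). lra. }
  assert (HB1 : 0 <= B1). { pose proof (Y_bound d 0 Hd) as HH. pose proof (Rabs_pos (Y d 0 - INR 0 * c d)). unfold B1. lra. }
  set (M := 2 * B1 + K + c d).
  destruct (nfloor_ex (2 * M / eta)) as [n0 Hn0]. { apply Rdiv_le_0_compat; unfold M; lra. }
  exists (S n0). intros N HN. destruct N as [|n]; [lia|]. unfold R_dist.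
  assert (HNpos : 0 < INR (S n)) by (apply lt_0_INR; lia).
  assert (HNge : INR (S n0) <= INR (S n)) by (apply le_INR; lia).
  rewrite S_INR in HNge. 
  assert (HM : M < eta * INR (S n) / 2).
  { apply Rmult_lt_reg_r with (2 / eta). apply Rdiv_lt_0_compat; lra.
    replace (eta * INR (S n) / 2 * (2 / eta)) with (INR (S n)) by (field; lra).
    replace (M * (2 / eta)) with (2 * M / eta) by (field; lra). lra. }
  destruct (ES2_cmp d n eps Hd He0) as [L U]. fold K in L, U.
  pose proof (Y_bound d n Hd) as HY. fold B1 in HY. apply Rabs_le_between in HY.
  assert (HU : ES2 d (S n) - INR (S n) * c d <= eps * INR (S n) * c d + M).
  { rewrite S_INR. assert ((1 + eps) * Y d n <= (1 + eps) * (INR n * c d + B1)) by (apply Rmult_le_compat_l; lra).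
    unfold M. assert (0 <= INR n) by apply pos_INR. nra. }
  assert (HL : - (eps * INR (S n) * c d + M) <= ES2 d (S n) - INR (S n) * c d).
  { rewrite S_INR. assert ((1 - eps) * (INR n * c d - B1) <= (1 - eps) * Y d n) by (apply Rmult_le_compat_l; lra).
    unfold M. assert (0 <= INR n) by apply pos_INR. nra. }
  replace (ES2 d (S n) / INR (S n) - c d) with ((ES2 d (S n) - INR (S n) * c d) / INR (S n)) by (field; lra).
  rewrite Rabs_div, (Rabs_right (INR (S n))) by lra.
  apply Rmult_lt_reg_r with (INR (S n)); auto. unfold Rdiv; rewrite Rmult_assoc, Rinv_l, Rmult_1_r by lra.
  apply Rabs_def1.
  - apply Rle_lt_trans with (eps * INR (S n) * c d + M); auto.
    assert (eps * INR (S n) * c d <= eta / 2 * INR (S n)) by (replace (eps * INR (S n) * c d) with ((eps * c d) * INR (S n)) by ring; apply Rmult_le_compat_r; lra). lra.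
  - apply Rlt_le_trans with (- (eps * INR (S n) * c d + M)); auto.
    assert (eps * INR (S n) * c d <= eta / 2 * INR (S n)) by (replace (eps * INR (S n) * c d) with ((eps * c d) * INR (S n)) by ring; apply Rmult_le_compat_r; lra). lra.
Qed.

Lemma in_all_paths n p : In p (all_paths n) -> length p = n /\ Forall (fun s => s = 1%Z \/ s = (-1)%Z) p.
Proof.
  revert p; induction n; intros p Hp; simpl in Hp.
  - destruct Hp as [<- | []]. simpl; auto.
  - apply in_app_or in Hp. destruct Hp as [Hp|Hp]; apply in_map_iff in Hp; destruct Hp as [r [<- Hr]];
    destruct (IHn r Hr); simpl; split; auto.
Qed.

Fixpoint altexit (sg : Z) (j : nat) (p : list Z) : bool :=
  match j, p with
  | O, t :: _ => Z.eqb t sg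
  | S j', t :: rest => Z.eqb t (- sg) && altexit t j' rest
  | _, [] => false
  end.

Lemma onedge_step (onedge : Z -> bool) x sg t :
  (forall z, onedge z = true <-> z = x \/ z = (x - sg)%Z) -> (sg = 1 \/ sg = -1)%Z -> (t = 1 \/ t = -1)%Z ->
  onedge (x + t)%Z = Z.eqb t (- sg).
Proof.
  intros Ho Hs Ht. destruct (Z.eqb_spec t (- sg)).
  - apply Ho. right. lia.
  - destruct (onedge (x + t)%Z) eqn:E; auto. apply Ho in E. lia.
Qed.

Lemma tau_local j : forall (onedge : Z -> bool) x sg p,
  (forall z, onedge z = true <-> z = x \/ z = (x - sg)%Z) -> (sg = 1 \/ sg = -1)%Z ->
  length p = S j -> Forall (fun s => s = 1%Z \/ s = (-1)%Z) p ->
  forallb onedge (firstn j (positions x p)) && negb (onedge (nth j (positions x p) 0%Z)) = altexit sg j p.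
Proof.
  induction j; intros onedge x sg p Ho Hs Hl Hf; destruct p as [|t rest]; simpl in Hl; try lia;
    inversion Hf; subst; simpl.
  - rewrite (onedge_step onedge x sg t Ho Hs H1). destruct Hs as [-> | ->]; destruct H1 as [-> | ->]; reflexivity.
  - rewrite (onedge_step onedge x sg t Ho Hs H1).
    destruct (Z.eqb_spec t (- sg)); simpl; [|reflexivity].
    apply IHj; [intros z; rewrite Ho; lia | lia | lia | auto].
Qed.

Lemma tau_event_cons j s rest : (s = 1 \/ s = -1)%Z -> length rest = S j ->
  Forall (fun s => s = 1%Z \/ s = (-1)%Z) rest -> tau_event (S j) (s :: rest) = altexit s j rest.
Proof.
  intros Hs Hl Hf. unfold tau_event. simpl positions. simpl nth. simpl firstn.
  simpl forallb. rewrite Z.eqb_refl, orb_true_r. simpl.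
  apply tau_local; auto. intros z. rewrite orb_true_iff, !Z.eqb_eq. lia.
Qed.

Fixpoint Tm d m j := match j with O => 1 | S j' => recross_prob d m * Tm d (S m) j' end.

Lemma Tm_T d j : forall k, Tm d (S k) j * T d k = T d (k + j).
Proof.
  induction j; intros k; simpl. rewrite Nat.add_0_r; ring.
  rewrite Nat.add_succ_r, <- Nat.add_succ_l, <- IHj. simpl. fold (rk d k). ring.
Qed.

Lemma Pexit d j : 0 < d -> forall sg m, (sg = 1 \/ sg = -1)%Z ->
  Ex d (S j) sg m (fun p => if altexit sg j p then 1 else 0) = Tm d m j * (1 - recross_prob d (m + j)).
Proof.
  intros Hd; induction j; intros sg m Hs.
  - rewrite Ex_step by auto. unfold Ex; simpl. rewrite Nat.add_0_r.
    destruct Hs as [-> | ->]; simpl; ring.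
  - rewrite Ex_step by auto. simpl altexit. rewrite Z.eqb_refl. simpl andb.
    rewrite (Ex_ext _ _ _ _ (fun p => if (sg =? - sg)%Z && altexit sg j p then 1 else 0) (fun _ => 0 * 1)).
    2:{ intros; replace (sg =? - sg)%Z with false by (symmetry; apply Z.eqb_neq; lia). simpl; ring. }
    rewrite IHj by lia.
    rewrite Ex_scal. simpl. rewrite Nat.add_succ_r. ring.
Qed.

Lemma all_paths_S n : all_paths (S n) = map (cons 1%Z) (all_paths n) ++ map (cons (-1)%Z) (all_paths n).
Proof. reflexivity. Qed.

Lemma tau_pmf_S d j : 0 < d < 2/3 -> tau_pmf d (S j) = ff d j.
Proof.
  intros Hd. unfold tau_pmf. rewrite all_paths_S, map_app, sumR_app, !map_map.
  assert (Hs : forall s, (s = 1 \/ s = -1)%Z ->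
    sumR (map (fun x => if tau_event (S j) (s :: x) then path_prob d (s :: x) else 0) (all_paths (S j)))
    = / 2 * ff d j).
  { intros s Hs. transitivity (/ 2 * Ex d (S j) s 1 (fun p => if altexit s j p then 1 else 0)).
    - unfold Ex. rewrite <- sumR_scal. apply sumR_ext. intros x Hx. destruct (in_all_paths _ _ Hx).
      rewrite tau_event_cons by auto. destruct altexit; [|ring].
      destruct Hs as [-> | ->]; simpl; ring.
    - rewrite Pexit by (lra || auto). pose proof (Tm_T d j 0) as HT. simpl T in HT. rewrite Rmult_1_r in HT.
      rewrite HT. unfold ff. simpl T. change (1 + j)%nat with (S j). fold (rk d j). ring. }
  rewrite (Hs 1%Z), (Hs (-1)%Z) by lia. field.
Qed.

Lemma tau_pmf_0 d : tau_pmf d 0 = 0.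
Proof. unfold tau_pmf. simpl. ring. Qed.

Lemma inf_odd d : 0 < d < 2/3 -> infinite_sum (fun k => if Nat.odd k then tau_pmf d k else 0) (p d).
Proof.
  intros Hd. apply is_series_Reals. apply is_series_decr_1.
  match goal with |- is_series _ ?L => replace L with (p d) end.
  2:{ change (p d = p d + - (if Nat.odd 0 then tau_pmf d 0 else 0)). cbv [Nat.odd Nat.even negb]. ring. }
  apply is_series_ext with (ev d). { intros n. unfold ev. rewrite Nat.odd_succ, tau_pmf_S by auto. reflexivity. }
  apply Series_correct, ex_ev; auto.
Qed.

Lemma inf_even d : 0 < d < 2/3 -> infinite_sum (fun k => if Nat.even k then tau_pmf d k else 0) (q d).
Proof.
  intros Hd. apply is_series_Reals. apply is_series_decr_1.
  match goal with |- is_series _ ?L => replace L with (q d) end.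
  2:{ change (q d = q d + - (if Nat.even 0 then tau_pmf d 0 else 0)). cbv [Nat.even]. rewrite tau_pmf_0. ring. }
  apply is_series_ext with (od d). { intros n. unfold od. rewrite Nat.even_succ, tau_pmf_S by auto. reflexivity. }
  apply Series_correct, ex_od; auto.
Qed.

Lemma nxn_lim x : 0 < x < 1 -> is_lim_seq (fun n => INR (S n) * x ^ n) 0.
Proof.
  intros Hx. apply ex_series_lim_0. apply ex_series_Rabs.
  apply ex_series_DAlembert with x; [lra| |].
  - intros n. apply Rmult_integral_contrapositive. split. apply not_0_INR; lia. apply pow_nonzero; lra.
  - apply is_lim_seq_ext with (fun n => (1 + / INR (S n)) * x).
    { intros n. assert (0 < INR (S n)) by (apply lt_0_INR; lia). assert (0 < x ^ n) by (apply pow_lt; lra).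
      rewrite (S_INR (S n)). change (x ^ S n) with (x * x ^ n).
      replace ((INR (S n) + 1) * (x * x ^ n) / (INR (S n) * x ^ n)) with ((1 + / INR (S n)) * x) by (field; lra).
      rewrite Rabs_right; [reflexivity|]. apply Rle_ge. apply Rmult_le_pos; [|lra].
      pose proof (Rinv_0_lt_compat _ H). lra. }
    assert (L : is_lim_seq (fun n => (1 + / INR (S n)) * x) ((1 + 0) * x)).
    { apply is_lim_seq_mult'; [|apply is_lim_seq_const].
      apply is_lim_seq_plus'; [apply is_lim_seq_const|].
      assert (H := is_lim_seq_inv (fun n => INR (S n)) p_infty).
      simpl in H. apply H; [|discriminate]. apply (is_lim_seq_incr_1 INR p_infty). apply is_lim_seq_INR. }
    replace ((1 + 0) * x) with x in L by ring. exact L.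
Qed.

Lemma mu_series d : 0 < d < 2/3 -> is_series (fun k => INR (S k) * ff d k) (mu d).
Proof.
  intros Hd. unfold is_series. change (is_lim_seq (sum_n (fun k => INR (S k) * ff d k)) (mu d)).
  apply is_lim_seq_ext with (fun N => sum_n (T d) N - INR (S N) * T d (S N)).
  { induction n. rewrite !sum_O. unfold ff. simpl. ring.
    rewrite !sum_Sn, <- IHn. change (plus ?a ?b) with (a + b). unfold ff. rewrite (S_INR (S n)). ring. }
  replace (mu d) with (mu d - 0) by ring.
  apply is_lim_seq_minus'.
  - pose proof (Series_correct _ (ex_T d Hd)). exact H.
  - apply is_lim_seq_le_le with (fun _ => 0) (fun n => INR (S n) * (1 - d) ^ n).
    + intros n. pose proof (T_pos d (S n) Hd). pose proof (T_le d (S n) Hd). assert (0 < INR (S n)) by (apply lt_0_INR; lia).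
      split; [nra|]. apply Rmult_le_compat_l; [lra|]. simpl in H0 |- *.
      assert (0 <= (1 - d) ^ n) by (apply pow_le; lra). 
      apply Rle_trans with ((1 - d) * (1 - d) ^ n); [exact H0| nra].
    + apply is_lim_seq_const.
    + apply nxn_lim. lra.
Qed.

Lemma inf_E d : 0 < d < 2/3 -> infinite_sum (fun k => INR k * tau_pmf d k) (mu d).
Proof.
  intros Hd. apply is_series_Reals. apply is_series_decr_1.
  match goal with |- is_series _ ?L => replace L with (mu d) end.
  2:{ change (mu d = mu d + - (INR 0 * tau_pmf d 0)). simpl INR. ring. }
  apply is_series_ext with (fun k => INR (S k) * ff d k).
  { intros n. rewrite tau_pmf_S by auto. reflexivity. }
  apply mu_series; auto.
Qed.

Fixpoint fs (a : nat -> R) (N : nat) : R := match N with O => 0 | S n => fs a n + a n end.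

Lemma fs_le a b N : (forall j, a j <= b j) -> fs a N <= fs b N.
Proof. intros H; induction N; simpl; [lra|]. specialize (H N). lra. Qed.

Lemma mu_split d N : 0 < d < 2/3 -> mu d = fs (T d) N + tls (T d) N.
Proof.
  intros Hd; induction N; simpl.
  - unfold mu, tls. rewrite Rplus_0_l. apply Series_ext; intros; reflexivity.
  - rewrite IHN. destruct (domT_tl d (T d) 1 N Hd) as [Hex _].
    { intros n. pose proof (T_pos d n Hd). rewrite Rabs_right; lra. }
    rewrite (tl_S _ _ Hex). ring.
Qed.

Lemma tail_T d N : 0 < d < 2/3 -> 0 <= tls (T d) N <= T d N / d.
Proof.
  intros Hd. destruct (domT_tl d (T d) 1 N Hd) as [Hex H].
  { intros n. pose proof (T_pos d n Hd). rewrite Rabs_right; lra. }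
  split.
  - apply Series_nonneg; auto. intros; left; apply T_pos; auto.
  - rewrite Rmult_1_l in H. apply Rabs_le_between in H. lra.
Qed.

Lemma T_up d j : 0 < d < 2/3 -> T d j <= 2 / (INR j + 2) * (1 - d) ^ j.
Proof.
  intros Hd; induction j.
  - simpl. lra.
  - simpl T. rewrite rk_val by auto. rewrite S_INR. pose proof (frac_bounds j). pose proof (pos_INR j).
    pose proof (T_pos d j Hd).
    assert (HA : (2 + INR j) / (3 + INR j) - d <= (2 + INR j) / (3 + INR j) * (1 - d)) by nra.
    apply Rle_trans with (2 / (INR j + 2) * (1 - d) ^ j * ((2 + INR j) / (3 + INR j) * (1 - d))).
    + apply Rmult_le_compat; auto; lra.
    + right. simpl. field. lra.
Qed.

Lemma T_low d j : 0 < d < 2/3 -> 2 / (INR j + 2) * (1 - 3 * d / 2) ^ j <= T d j.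
Proof.
  intros Hd; induction j.
  - simpl. lra.
  - simpl T. rewrite rk_val by auto. rewrite S_INR. pose proof (frac_bounds j). pose proof (pos_INR j).
    assert (HA : (2 + INR j) / (3 + INR j) * (1 - 3 * d / 2) <= (2 + INR j) / (3 + INR j) - d) by nra.
    assert (0 <= (1 - 3 * d / 2) ^ j) by (apply pow_le; lra).
    assert (0 <= 2 / (INR j + 2)) by (apply Rdiv_le_0_compat; lra).
    apply Rle_trans with (2 / (INR j + 2) * (1 - 3 * d / 2) ^ j * ((2 + INR j) / (3 + INR j) * (1 - 3 * d / 2))).
    + right. simpl. field. lra.
    + apply Rmult_le_compat; auto. apply Rmult_le_pos; auto. apply Rmult_le_pos; lra.
Qed.

Lemma ln_lower y : 0 < y -> y / (1 + y) <= ln (1 + y).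
Proof.
  intros Hy. pose proof (exp_ineq1_le (- (y / (1 + y)))).
  replace (1 + - (y / (1 + y))) with (/ (1 + y)) in H by (field; lra).
  apply ln_le in H; [|apply Rinv_0_lt_compat; lra]. rewrite ln_exp, ln_Rinv in H by lra. lra.
Qed.

Lemma ln_upper y : 0 < y -> ln (1 + y) <= y.
Proof.
  intros Hy. pose proof (exp_ineq1_le y). apply ln_le in H; [|lra]. rewrite ln_exp in H. auto.
Qed.

Lemma harm_up N : fs (fun j => / (INR j + 2)) N <= ln (INR N + 1).
Proof.
  induction N; simpl fs.
  - simpl. rewrite Rplus_0_l, ln_1. lra.
  - rewrite S_INR. pose proof (pos_INR N).
    pose proof (ln_lower (/ (INR N + 1)) ltac:(apply Rinv_0_lt_compat; lra)).
    replace (/ (INR N + 1) / (1 + / (INR N + 1))) with (/ (INR N + 2)) in H0 by (field; lra).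
    replace (INR N + 1 + 1) with ((INR N + 1) * (1 + / (INR N + 1))) by (field; lra).
    rewrite ln_mult; [lra|lra|]. pose proof (Rinv_0_lt_compat (INR N + 1)). lra.
Qed.

Lemma harm_low N : ln (INR N + 2) - ln 2 <= fs (fun j => / (INR j + 2)) N.
Proof.
  induction N; simpl fs.
  - simpl. rewrite Rplus_0_l. lra.
  - rewrite S_INR. pose proof (pos_INR N).
    pose proof (ln_upper (/ (INR N + 2)) ltac:(apply Rinv_0_lt_compat; lra)).
    replace (INR N + 1 + 2) with ((INR N + 2) * (1 + / (INR N + 2))) by (field; lra).
    rewrite ln_mult; [lra|lra|]. pose proof (Rinv_0_lt_compat (INR N + 2)). lra.
Qed.

Lemma bernoulli a N : 0 <= a <= 1 -> 1 - INR N * a <= (1 - a) ^ N.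
Proof.
  intros Ha; induction N; [simpl; lra|]. rewrite S_INR. change ((1 - a) ^ S N) with ((1 - a) * (1 - a) ^ N).
  pose proof (pos_INR N). nra.
Qed.

Lemma fs_scal a k N : fs (fun j => k * a j) N = k * fs a N.
Proof. induction N; simpl; [ring|rewrite IHN; ring]. Qed.

Lemma pow_le1 x n : 0 <= x <= 1 -> x ^ n <= 1.
Proof. intros Hx; induction n; simpl; [lra|]. assert (0 <= x ^ n) by (apply pow_le; lra). nra. Qed.

Lemma mu_upper d : 0 < d < 2/3 -> d <= 1/100 -> mu d <= 4 + 2 * (- ln d).
Proof.
  intros Hd Hd2. destruct (nfloor_ex (/ d)) as [N HN]. { left; apply Rinv_0_lt_compat; lra. }
  rewrite (mu_split d N Hd). pose proof (tail_T d N Hd).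
  assert (Hf : fs (T d) N <= 2 * fs (fun j => / (INR j + 2)) N).
  { rewrite <- fs_scal. apply fs_le. intros j. eapply Rle_trans. apply T_up; auto.
    pose proof (pos_INR j). assert (0 < (1-d)^j <= 1) by (split; [apply pow_lt; lra| apply pow_le1; lra]).
    unfold Rdiv. assert (0 < / (INR j + 2)) by (apply Rinv_0_lt_compat; lra). nra. }
  pose proof (harm_up N).
  assert (HT : T d N / d <= 2).
  { pose proof (T_up d N Hd). pose proof (pow_le1 (1 - d) N ltac:(lra)). pose proof (pos_INR N).
    assert (0 < / (INR N + 2)) by (apply Rinv_0_lt_compat; lra).
    assert (T d N <= 2 / (INR N + 2)) by (unfold Rdiv in *; nra).
    assert (/ (INR N + 2) <= d).
    { rewrite <- (Rinv_inv d). apply Rinv_le_contravar. apply Rinv_0_lt_compat; lra. lra. }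
    apply Rmult_le_reg_r with d; [lra|]. unfold Rdiv at 1; rewrite Rmult_assoc, Rinv_l, Rmult_1_r by lra.
    unfold Rdiv in *. lra. }
  assert (Hln : ln (INR N + 1) <= ln 2 - ln d).
  { rewrite <- ln_div by lra. apply ln_le. pose proof (pos_INR N); lra.
    apply Rle_trans with (/ d + 1). lra. assert (1 <= / d) by (rewrite <- Rinv_1; apply Rinv_le_contravar; lra).
    unfold Rdiv. lra. }
  assert (ln 2 < 1). { rewrite <- ln_exp with 1. apply ln_increasing; [lra|]. pose proof (exp_ineq1 1). lra. }
  lra.
Qed.

Lemma fs_le_range a b N : (forall j, (j < N)%nat -> a j <= b j) -> fs a N <= fs b N.
Proof. induction N; intros H; simpl; [lra|]. assert (a N <= b N) by (apply H; lia).
  assert (fs a N <= fs b N) by (apply IHN; intros; apply H; lia). lra. Qed.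

Lemma pow_mono_exp y j N : 0 <= y <= 1 -> (j <= N)%nat -> y ^ N <= y ^ j.
Proof.
  intros Hy HjN. replace N with (j + (N - j))%nat by lia. rewrite pow_add.
  pose proof (pow_le1 y (N - j) Hy). assert (0 <= y ^ j) by (apply pow_le; lra).
  assert (0 <= y ^ (N - j)) by (apply pow_le; lra). nra.
Qed.

Lemma mu_lower d : 0 < d < 2/3 -> d <= 1/100 -> - ln d - ln 6 <= mu d.
Proof.
  intros Hd Hd2. destruct (nfloor_ex (/ (3 * d))) as [N HN]. { left; apply Rinv_0_lt_compat; lra. }
  rewrite (mu_split d N Hd). pose proof (tail_T d N Hd).
  set (y := 1 - 3 * d / 2).
  assert (Hy : 1/2 <= y ^ N).
  { eapply Rle_trans; [|apply bernoulli; unfold y; lra]. 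
    assert (INR N * (3 * d) <= 1). { apply Rmult_le_reg_r with (/ (3 * d)). apply Rinv_0_lt_compat; lra.
      rewrite Rmult_assoc, Rinv_r, Rmult_1_r, Rmult_1_l by lra. lra. } lra. }
  assert (Hf : fs (fun j => / (INR j + 2)) N <= fs (T d) N).
  { apply fs_le_range. intros j Hj. pose proof (T_low d j Hd). fold y in H0.
    pose proof (pow_mono_exp y j N ltac:(unfold y; lra) ltac:(lia)). pose proof (pos_INR j).
    assert (0 < / (INR j + 2)) by (apply Rinv_0_lt_compat; lra). unfold Rdiv in H0. nra. }
  pose proof (harm_low N).
  assert (Hln : - ln d - ln 6 <= ln (INR N + 2) - ln 2).
  { replace (- ln d - ln 6) with (ln (/ (3 * d)) - ln 2).
    2:{ rewrite ln_Rinv, ln_mult by lra. replace 6 with (3 * 2) by ring. rewrite ln_mult by lra. ring. }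
    apply Rplus_le_compat_r. apply ln_le. apply Rinv_0_lt_compat; lra. lra. }
  lra.
Qed.

Lemma ln100 : 4 <= ln 100 /\ 2 * ln 6 <= ln 100.
Proof.
  split.
  - assert (exp 4 <= 100).
    { replace 4 with (1 + 1 + (1 + 1)) by ring. rewrite !exp_plus. pose proof exp_le_3.
      pose proof (exp_pos 1).
      assert (exp 1 * exp 1 <= 3 * 3) by (apply Rmult_le_compat; lra).
      assert (exp 1 * exp 1 * (exp 1 * exp 1) <= 9 * 9) by (apply Rmult_le_compat; try lra; apply Rmult_le_pos; lra).
      lra. }
    rewrite <- (ln_exp 4). apply ln_le; [apply exp_pos| auto].
  - replace (2 * ln 6) with (ln 6 + ln 6) by ring. rewrite <- ln_mult by lra. apply ln_le; lra.
Qed.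

Lemma c_bounds d : 0 < d < 1/100 ->
  1/9 / (- ln d) <= c d <= 16 / (- ln d) /\ 4 <= - ln d /\ 2 * ln 6 <= - ln d.
Proof.
  intros Hd. assert (Hd' : 0 < d < 2/3) by lra.
  assert (HL : ln 100 < - ln d).
  { assert (ln d < ln (/ 100)) by (apply ln_increasing; lra). rewrite ln_Rinv in H by lra. lra. }
  destruct ln100 as [H4 H6]. set (L := - ln d) in *.
  pose proof (mu_upper d Hd' ltac:(lra)). pose proof (mu_lower d Hd' ltac:(lra)). fold L in H, H0.
  pose proof (p_low d Hd'). pose proof (q_low d Hd'). pose proof (p_plus_q d Hd'). pose proof (mu_ge1 d Hd').
  assert (Hq8 : 1/8 <= q d) by nra.
  assert (HLpos : 0 < L) by lra.
  assert (Hqm1 : q d * mu d <= 3 * L) by nra.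
  assert (Hqm2 : 1/8 * (L/2) <= q d * mu d) by nra.
  assert (Hqm0 : 0 < q d * mu d) by nra.
  split; [|lra]. unfold c. split.
  - apply Rle_trans with (p d / (3 * L)).
    + unfold Rdiv. replace (1 * / 9 * / L) with (1/3 * / (3 * L)) by (field; lra).
      apply Rmult_le_compat_r; [left; apply Rinv_0_lt_compat; lra| lra].
    + unfold Rdiv. apply Rmult_le_compat_l; [lra|]. apply Rinv_le_contravar; lra.
  - apply Rle_trans with (1 / (q d * mu d)).
    + unfold Rdiv. apply Rmult_le_compat_r; [left; apply Rinv_0_lt_compat; lra| lra].
    + unfold Rdiv. replace (16 * / L) with (1 * / (1/8 * (L/2))) by (field; lra).
      apply Rmult_le_compat_l; [lra|]. apply Rinv_le_contravar; [nra| lra].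
Qed.

Theorem theorem3 :
  exists nu : R -> R,
    (forall delta : R, 0 < delta < 2 / 3 ->
       Un_cv (fun n => ES2 delta n / INR n) (nu delta) /\
       0 < nu delta /\
       exists p_odd p_even Etau : R,
         infinite_sum (fun k => if Nat.odd k then tau_pmf delta k else 0) p_odd /\
         infinite_sum (fun k => if Nat.even k then tau_pmf delta k else 0) p_even /\
         infinite_sum (fun k => INR k * tau_pmf delta k) Etau /\
         nu delta = p_odd / (p_even * Etau)) /\
    (forall eps : R, eps > 0 -> exists eta : R, eta > 0 /\
       forall delta : R, 0 < delta < eta -> Rabs (nu delta) < eps) /\
    (exists c C delta0 : R, 0 < c /\ c <= C /\ 0 < delta0 < 2 / 3 /\
       forall delta : R, 0 < delta < delta0 ->
         c / Rabs (ln delta) <= nu delta <= C / Rabs (ln delta)).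
Proof.
  exists c. split; [|split].
  - intros d Hd. split; [apply ES2_lim; auto|]. split; [apply c_pos; auto|].
    exists (p d), (q d), (mu d). split; [apply inf_odd; auto|]. split; [apply inf_even; auto|].
    split; [apply inf_E; auto|]. reflexivity.
  - intros eps Heps. exists (Rmin (1/100) (exp (- (16 / eps)))). split.
    { apply Rmin_pos; [lra| apply exp_pos]. }
    intros d Hd. assert (H1 : d < 1/100) by (eapply Rlt_le_trans; [apply Hd| apply Rmin_l]).
    assert (H2 : d < exp (- (16 / eps))) by (eapply Rlt_le_trans; [apply Hd| apply Rmin_r]).
    destruct (c_bounds d ltac:(lra)) as [[Hc1 Hc2] [HL _]].
    pose proof (c_pos d ltac:(lra)). rewrite Rabs_right by lra.
    assert (ln d < - (16 / eps)). { rewrite <- (ln_exp (- (16 / eps))). apply ln_increasing; lra. }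
    eapply Rle_lt_trans; [apply Hc2|].
    apply Rmult_lt_reg_r with (- ln d); [lra|]. unfold Rdiv; rewrite Rmult_assoc, Rinv_l, Rmult_1_r by lra.
    apply Rmult_lt_reg_r with (/ eps); [apply Rinv_0_lt_compat; lra|].
    replace (eps * - ln d * / eps) with (- ln d) by (field; lra). unfold Rdiv in H0. lra.
  - exists (1/9), 16, (1/100). split; [lra|]. split; [lra|]. split; [lra|].
    intros d Hd. destruct (c_bounds d Hd) as [[Hc1 Hc2] [HL _]].
    rewrite Rabs_left by lra. split; lra.
Qed.
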